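(* Let $0<c<1$, $\beta_1,\dots,\beta_p>0$ with $\beta_i-\beta_j\notin\mathbb Z$ for $i\neq j$, and let $M^{(\mathrm{II})}_{2:\vec n}$ be the type II multiple Meixner polynomials of the second kind. Then for $x\in\mathbb N_0$ (and hence as polynomials) $$M^{(\mathrm{II})}_{2:\vec n}(x;\vec\beta,c)=\Big(\frac{c}{c-1}\Big)^{|\vec n|}\prod_{j=1}^p(\beta_j)_{n_j}\,\frac{1}{c^x}\;{}_{p+1}F_p\!\left(\begin{matrix}-x,\beta_1+n_1,\dots,\beta_p+n_p\\ \beta_1,\dots,\beta_p\end{matrix};1-c\right).$$
   Context: $(a)_m$ is the Pochhammer symbol; ${}_{p+1}F_p(a_1,\dots,a_{p+1};b_1,\dots,b_p;z)=\sum_{l\ge0}\frac{(a_1)_l\cdots(a_{p+1})_l}{(b_1)_l\cdots(b_p)_l}\frac{z^l}{l!}$. Multiple Meixner weights of the second kind: $w_i(x)=\frac{\Gamma(\beta_i+x)}{\Gamma(\beta_i)\Gamma(x+1)}c^x$, $x\in\Delta=\mathbb N_0$, $i=1,\dots,p$. The type II polynomial for multi-index $\vec n\in\mathbb N_0^p$ is the monic polynomial $B$ of degree $|\vec n|=n_1+\dots+n_p$ with $\sum_{k\ge0}k^jB(k)w_i(k)=0$ for $0\le j\le n_i-1$, $1\le i\le p$. *)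

(* Defs.v *)
From HB Require Import structures.
From mathcomp Require Import all_boot all_order all_algebra.
From mathcomp Require Import all_classical all_reals all_analysis.
Set Implicit Arguments. Unset Strict Implicit. Unset Printing Implicit Defensive.
Import Order.TTheory GRing.Theory Num.Theory.
Import numFieldNormedType.Exports.
Local Open Scope classical_set_scope.
Local Open Scope ring_scope.

Definition pochhammer {R : realType} (a : R) (m : nat) : R :=
  \prod_(i < m) (a + i%:R).

Definition hypgeom_term {R : realType} (as_ bs : seq R) (z : R) (l : nat) : R :=
  (\prod_(a <- as_) pochhammer a l) / (\prod_(b <- bs) pochhammer b l)
    * z ^+ l / (l`!)%:R.

Definition hypgeom {R : realType} (as_ bs : seq R) (z : R) : R :=
  limn (series (hypgeom_term as_ bs z)).

(* Meixner weight of the second kind: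
   w(x) = Gamma(beta+x)/(Gamma(beta) Gamma(x+1)) c^x, for x in N_0;
   for integer x, Gamma(beta+x)/Gamma(beta) = (beta)_x and Gamma(x+1) = x!. *)
Definition meixner2_weight {R : realType} (beta c : R) (x : nat) : R :=
  pochhammer beta x / (x`!)%:R * c ^+ x.

Definition is_typeII_meixner2 {R : realType} (p : nat) (beta : 'I_p -> R) (c : R)
  (n : 'I_p -> nat) (B : {poly R}) : Prop :=
  [/\ B \is monic,
      size B = (\sum_(i < p) n i).+1 &
      forall (i : 'I_p) (j : nat), (j < n i)%N ->
        (series (fun k : nat => (k%:R) ^+ j * B.[k%:R] * meixner2_weight (beta i) c k))
          @ \oo --> (0 : R)].

(* Main.v *)
Require Import Defs.
From HB Require Import structures.
From mathcomp Require Import all_boot all_order all_algebra.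
From mathcomp Require Import all_classical all_reals all_analysis.
From mathcomp Require Import ring lra zify.
Import Order.TTheory GRing.Theory Num.Theory.
Import numFieldNormedType.Exports.
Local Open Scope classical_set_scope.
Local Open Scope ring_scope.
Section Analytic.
Variable R : realType.
Variable c : R.
Hypothesis c0 : 0 < c.
Hypothesis c1 : c < 1.

Local Notation w b := (meixner2_weight b c).

Lemma poch0 (b : R) : pochhammer b 0 = 1.
Proof. by rewrite /pochhammer big_ord0. Qed.

Lemma pochS (b : R) k : pochhammer b k.+1 = pochhammer b k * (b + k%:R).
Proof. by rewrite /pochhammer big_ord_recr. Qed.

Lemma poch_gt0 (b : R) k : 0 < b -> 0 < pochhammer b k.
Proof. move=> b0; rewrite /pochhammer; apply: prodr_gt0 => i _; exact: ltr_wpDr. Qed.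

Lemma pochD (b : R) i k : pochhammer b (i + k) = pochhammer b i * pochhammer (b + i%:R) k.
Proof.
elim: k => [|k IH]; first by rewrite addn0 poch0 mulr1.
by rewrite addnS !pochS IH -mulrA natrD addrA.
Qed.

Lemma w_ge0 b k : 0 < b -> 0 <= w b k.
Proof.
move=> b0; rewrite /meixner2_weight; apply: mulr_ge0; last exact: exprn_ge0 (ltW c0).
by apply: divr_ge0; [apply: ltW; exact: poch_gt0 | exact: ler0n].
Qed.

Lemma w0 b : w b 0 = 1.
Proof. by rewrite /meixner2_weight poch0 fact0 expr0 divr1 mulr1. Qed.

Lemma wS b k : w b k.+1 = w b k * (c * (b + k%:R) / k.+1%:R).
Proof.
rewrite /meixner2_weight pochS factS natrM exprS.
have h1 : (k.+1%:R : R) != 0 by rewrite pnatr_eq0.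
have h2 : ((k`!)%:R : R) != 0 by rewrite pnatr_eq0 -lt0n fact_gt0.
by field; rewrite h2 andbT addrC natr1.
Qed.

Lemma w_cvg b : 0 < b -> cvgn (series (w b)).
Proof.
move=> b0.
have c0x := c0; have c1x := c1.
have r0 : 0 < (1 + c) / 2 by lra.
have r1 : (1 + c) / 2 < 1 by lra.
have cr : c < (1 + c) / 2 by lra.
move: r0 r1 cr; set r := (1 + c) / 2 => r0 r1 cr.
pose K := Num.truncn (c * b / (r - c)).
have HK : forall k, (K <= k)%N -> c * (b + k%:R) <= r * k.+1%:R.
  move=> k Kk.
  have h1 : c * b / (r - c) < K.+1%:R := Num.Theory.truncnS_gt _.
  have h2 : (K.+1%:R : R) <= k.+1%:R by rewrite ler_nat.
  have h3 : c * b < (r - c) * k.+1%:R.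
    by rewrite -ltr_pdivrMl ?subr_gt0 // mulrC; apply: lt_le_trans h2.
  rewrite -natr1 in h3 *; have hk : (0 : R) <= k%:R := ler0n _ _.
  nra.
have Hdec : forall k, w b (k + K) <= w b K * r ^+ k.
  elim=> [|k IH]; first by rewrite add0n expr0 mulr1.
  rewrite addSn wS exprS.
  have -> : w b K * (r * r ^+ k) = (w b K * r ^+ k) * r by ring.
  apply: ler_pM; [exact: w_ge0 | | exact: IH | ].
    apply: divr_ge0; last exact: ler0n.
    by apply: mulr_ge0; [exact: ltW | apply: addr_ge0; [exact: ltW|exact: ler0n]].
  rewrite ler_pdivrMr ?ltr0n //; apply: HK; exact: leq_addl.
pose M := \sum_(i < K.+1) w b i / r ^+ i.
have M0 : 0 <= M.
  by apply: sumr_ge0 => i _; apply: divr_ge0; [exact: w_ge0|exact: exprn_ge0 (ltW r0)].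
have Hb : forall k, w b k <= M * r ^+ k.
  move=> k.
  have rk : r ^+ k != 0 by rewrite expf_neq0 // gt_eqF.
  case: (leqP k K) => kK.
    rewrite -ler_pdivrMr ?exprn_gt0 //.
    rewrite /M (bigD1 (Ordinal (kK : (k < K.+1)%N))) //= lerDl.
    by apply: sumr_ge0 => i _; apply: divr_ge0; [exact: w_ge0|exact: exprn_ge0 (ltW r0)].
  have -> : k = ((k - K) + K)%N by rewrite subnK // ltnW.
  apply: le_trans (Hdec _) _.
  have -> : w b K * r ^+ (k - K) = (w b K / r ^+ K) * r ^+ (k - K + K).
    rewrite exprD; field; by rewrite expf_neq0 // gt_eqF.
  apply: ler_wpM2r; first exact: exprn_ge0 (ltW r0).
  rewrite /M (bigD1 (@ord_max K)) //= lerDl.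
  by apply: sumr_ge0 => i _; apply: divr_ge0; [exact: w_ge0|exact: exprn_ge0 (ltW r0)].
apply: (@series_le_cvg _ _ (geometric M r)).
- by move=> k; exact: w_ge0.
- by move=> k; rewrite /geometric /=; apply: mulr_ge0 => //; exact: exprn_ge0 (ltW r0).
- by move=> k; exact: Hb.
- apply: is_cvg_geometric_series; rewrite ger0_norm //; exact: ltW.
Qed.


Definition ffe (i : nat) (x : R) : R := \prod_(t < i) (x - t%:R).

Lemma ffe0 x : ffe 0 x = 1.
Proof. by rewrite /ffe big_ord0. Qed.

Lemma ffeS i x : ffe i.+1 x = ffe i x * (x - i%:R).
Proof. by rewrite /ffe big_ord_recr. Qed.

Lemma ffeSl i x : ffe i.+1 x = x * ffe i (x - 1).
Proof.
rewrite /ffe big_ord_recl /= subr0; congr (_ * _).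
by apply: eq_bigr => t _; rewrite /bump /= natrD; lra.
Qed.

Lemma ffe_small k i : (k < i)%N -> ffe i k%:R = 0.
Proof.
move=> ki; rewrite /ffe (bigD1 (Ordinal ki)) //= subrr mul0r //.
Qed.

Lemma ffe_fact k i : ffe i (k + i)%:R / (k + i)`!%:R = (k`!%:R)^-1.
Proof.
elim: i => [|i IH]; first by rewrite ffe0 addn0 div1r.
rewrite ffeSl addnS factS natrM.
have -> : (k + i).+1%:R - 1 = (k + i)%:R :> R by rewrite -natr1 addrK.
rewrite -IH.
have h1 : ((k + i).+1%:R : R) != 0 by rewrite pnatr_eq0.
have h2 : (((k + i)`!)%:R : R) != 0 by rewrite pnatr_eq0 -lt0n fact_gt0.
by field; rewrite h2 -natrD addrC natr1 pnatr_eq0.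
Qed.

Lemma ffw_shift b i k :
  ffe i (k + i)%:R * w b (k + i) = c ^+ i * pochhammer b i * w (b + i%:R) k.
Proof.
rewrite /meixner2_weight (addnC k i) pochD exprD (addnC i k).
have := ffe_fact k i; rewrite -/(ffe i _) => h.
have h2 : (((k + i)`!)%:R : R) != 0 by rewrite pnatr_eq0 -lt0n fact_gt0.
have h3 : ((k`!)%:R : R) != 0 by rewrite pnatr_eq0 -lt0n fact_gt0.
rewrite -[ffe i _](divfK h2) h.
by field; rewrite h2 h3.
Qed.

Lemma series_shift (a : R ^nat) m (l : R) : (forall k, (k < m)%N -> a k = 0) ->
  series (fun k => a (k + m)%N) @ \oo --> l -> series a @ \oo --> l.
Proof.
move=> ha h; rewrite -(cvg_shiftn m).
suff E : (fun n => series a (n + m)%N) = series (fun k => a (k + m)%N) by rewrite /= E.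
apply: funext => n /=; rewrite /series /=.
rewrite (@big_cat_nat _ _ _ m) ?leq_addl //=.
rewrite big_nat big1 ?add0r; last by move=> k /andP[_ km]; exact: ha.
by rewrite -{1}(add0n m) big_addn addnK.
Qed.

Definition S b := limn (series (w b)).

Lemma S_cvg b : 0 < b -> series (w b) @ \oo --> S b.
Proof. by move=> b0; exact: w_cvg. Qed.


Lemma seriesMl (C : R) (f : R ^nat) :
  series (fun k => C * f k) = (fun n => C * series f n).
Proof. by apply: funext => n; rewrite /series /= big_distrr. Qed.

Lemma seriesD' (f g : R ^nat) :
  series (fun k => f k + g k) = (fun n => series f n + series g n).
Proof. by apply: funext => n; rewrite /series /= big_split. Qed.

Lemma ffw_cvg b i : 0 < b ->
  series (fun k => ffe i k%:R * w b k) @ \oo -->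
    c ^+ i * pochhammer b i * S (b + i%:R).
Proof.
move=> b0; apply: (@series_shift _ i).
  by move=> k ki; rewrite ffe_small // mul0r.
under eq_fun do rewrite ffw_shift.
rewrite seriesMl; apply: cvgMl_tmp; apply: S_cvg.
by apply: ltr_wpDr => //; exact: ler0n.
Qed.

Lemma S_rec b : 0 < b -> S (b + 1) * (1 - c) = S b.
Proof.
move=> b0.
have hb : b != 0 by rewrite gt_eqF.
have P1 : forall k, pochhammer (b + 1) k = pochhammer b k * (b + k%:R) / b.
  move=> k; have := pochD b 1 k.
  rewrite add1n pochS pochS poch0 mul1r addr0 => ->; by field.
have E : forall k, w (b + 1) k = w b k + b^-1 * (ffe 1 k%:R * w b k).
  move=> k; rewrite ffeS ffe0 mul1r subr0 /meixner2_weight P1.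
  have hf : ((k`!)%:R : R) != 0 by rewrite pnatr_eq0 -lt0n fact_gt0.
  by field; rewrite hf hb.
have h1 : series (w (b + 1)) @ \oo --> S b + b^-1 * (c ^+ 1 * pochhammer b 1 * S (b + 1%:R)).
  have -> : w (b + 1) = fun k => w b k + b^-1 * (ffe 1 k%:R * w b k) by apply: funext; exact: E.
  rewrite seriesD'; apply: cvgD; first exact: S_cvg.
  rewrite seriesMl; apply: cvgMl_tmp; exact: ffw_cvg.
have h2 := cvg_lim (@norm_hausdorff _ R^o) h1.
rewrite pochS poch0 mul1r addr0 expr1 in h2.
have : S (b + 1) = S b + c * S (b + 1).
  rewrite {1}/S h2; by field.
move=> h; rewrite mulrBr mulr1 {1}h; ring.
Qed.


Lemma S_shift b i : 0 < b -> S (b + i%:R) = S b / (1 - c) ^+ i.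
Proof.
move=> b0; elim: i => [|i IH]; first by rewrite addr0 expr0 divr1.
have bi : 0 < b + i%:R by apply: ltr_wpDr => //; exact: ler0n.
have h := S_rec _ bi.
have hc : 1 - c != 0 by rewrite subr_eq0 eq_sym lt_eqF.
have -> : S b = S (b + i%:R) * (1 - c) ^+ i by rewrite IH; field; rewrite expf_neq0.
rewrite -natr1 addrA exprS -h; field; by rewrite hc expf_neq0.
Qed.

Lemma S_gt0 b : 0 < b -> 0 < S b.
Proof.
move=> b0; apply: (@lt_le_trans _ _ 1); first exact: ltr01.
have h1 : series (w b) 1 = 1 by rewrite /series /= big_nat1 w0.
rewrite -h1; apply: nondecreasing_cvgn_le; last exact: w_cvg.
by apply: nondecreasing_series => k _ _; exact: w_ge0.
Qed.

Lemma poly_cvg b d (g : nat -> R) : 0 < b ->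
  series (fun k => (\sum_(i < d) g i * ffe i k%:R) * w b k) @ \oo -->
    S b * \sum_(i < d) g i * (pochhammer b i * (c / (1 - c)) ^+ i).
Proof.
move=> b0; elim: d => [|d IH].
  under eq_fun do rewrite big_ord0 mul0r.
  rewrite big_ord0 mulr0.
  have -> : series (fun _ : nat => (0 : R)) = fun _ => 0.
    by apply: funext => n; rewrite /series /= big1.
  exact: cvg_cst.
under eq_fun do rewrite big_ord_recr /= mulrDl.
rewrite big_ord_recr /= mulrDr seriesD'; apply: cvgD; first exact: IH.
under eq_fun do rewrite -mulrA.
rewrite seriesMl.
have -> : S b * (g d * (pochhammer b d * (c / (1 - c)) ^+ d)) =
   g d * (c ^+ d * pochhammer b d * S (b + d%:R)).
  have hc : 1 - c != 0 by rewrite subr_eq0 eq_sym lt_eqF.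
  rewrite S_shift // expr_div_n; field; by rewrite expf_neq0.
apply: cvgMl_tmp; exact: ffw_cvg.
Qed.

End Analytic.
Arguments ffe {R}. Arguments S {R}.
Section Alg.
Variable R : realType.
Variable u : R.
Hypothesis u1 : 1 + u != 0.

Definition supp d (g : nat -> R) := forall i, (d <= i)%N -> g i = 0.

Definition sh (g : nat -> R) : nat -> R :=
  fun i => (if i is i'.+1 then g i' else 0) + i%:R * g i.

Lemma sh_supp d g : supp d g -> supp d.+1 (sh g).
Proof.
move=> hg [|i] hi //; rewrite /sh hg ?hg ?mulr0 ?addr0 //; exact: ltnW.
Qed.

Lemma sum_sh d g (F : nat -> R) : supp d g ->
  \sum_(i < d.+1) sh g i * F i =
  \sum_(i < d) g i * F i.+1 + \sum_(i < d) i%:R * g i * F i.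
Proof.
move=> hg; rewrite /sh.
under eq_bigr do rewrite mulrDl.
rewrite big_split /= big_ord_recl /= mul0r add0r big_ord_recr /= hg // mulr0 mul0r addr0.
by congr (_ + _); apply: eq_bigr => i _; rewrite /bump /=.
Qed.

Lemma sh_eval d g x : supp d g ->
  x * \sum_(i < d) g i * ffe i x = \sum_(i < d.+1) sh g i * ffe i x.
Proof.
move=> hg; rewrite (@sum_sh d g (fun i => ffe i x)) // -big_split /= big_distrr /=.
apply: eq_bigr => i _; rewrite ffeS; ring.
Qed.

Definition theta d (g : nat -> R) (l : R) := \sum_(i < d) g i * (- u) ^+ i * ffe i l.
Definition Eop (F : R -> R) (l : R) := l * (F l - (1 + u) * F (l - 1)).

Lemma theta_sh d g l : supp d g -> theta d.+1 (sh g) l = Eop (theta d g) l.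
Proof.
move=> hg; rewrite /theta /Eop.
under eq_bigr do rewrite -mulrA.
rewrite (@sum_sh d g (fun i => (- u) ^+ i * ffe i l)) // mulrBr !big_distrr /= -sumrB -big_split /=.
apply: eq_bigr => i _.
have hB : l * ffe i (l - 1) = ffe i l * (l - i%:R) by rewrite -ffeSl ffeS.
rewrite ffeS exprS.
transitivity (l * (g i * (- u) ^+ i * ffe i l) -
  (1 + u) * g i * (- u) ^+ i * (l * ffe i (l - 1))); last by ring.
rewrite hB; ring.
Qed.


Lemma iter_sh_supp d g j : supp d g -> supp (d + j) (iter j sh g).
Proof.
move=> hg; elim: j => [|j IH]; first by rewrite addn0.
by rewrite addnS /=; exact: sh_supp.
Qed.

Lemma iter_sh_eval d g j x : supp d g ->
  x ^+ j * \sum_(i < d) g i * ffe i x = \sum_(i < d + j) iter j sh g i * ffe i x.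
Proof.
move=> hg; elim: j => [|j IH]; first by rewrite expr0 mul1r addn0.
by rewrite exprS -mulrA IH addnS /= sh_eval //; exact: iter_sh_supp.
Qed.

Lemma iter_theta d g j l : supp d g ->
  theta (d + j) (iter j sh g) l = iter j Eop (theta d g) l.
Proof.
move=> hg; elim: j l => [|j IH] l; first by rewrite addn0.
rewrite addnS /= theta_sh; last exact: iter_sh_supp.
by rewrite /Eop !IH.
Qed.

Lemma vanish n : forall (F : R -> R) (b : R), 0 < b ->
  (forall j, (j < n)%N -> iter j Eop F (- b) = 0) ->
  forall s, (s < n)%N -> F (- b - s%:R) = 0.
Proof.
elim: n => [|n IH] F b b0 h s //.
rewrite ltnS leq_eqVlt => /orP[/eqP -> | sn]; last first.
  by apply: IH => // j jn; apply: h; exact: ltnW.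
case: n IH h => [|n] IH h.
  by rewrite subr0; apply: (h 0%N).
have h1 : F (- b - n%:R) = 0 by apply: IH => // j jn; apply: h; exact: ltnW.
have h2 : Eop F (- b - n%:R) = 0.
  apply: (IH (Eop F)) => // j jn.
  by rewrite -iterSr; apply: h.
move: h2; rewrite /Eop h1 sub0r.
have -> : - b - n%:R - 1 = - b - n.+1%:R by rewrite -natr1; ring.
move/eqP; rewrite mulf_eq0 => /orP[|].
  rewrite -opprD oppr_eq0 => /eqP hb; exfalso.
  have : 0 < b + n%:R by apply: ltr_wpDr => //; exact: ler0n.
  by rewrite hb ltxx.
by rewrite oppr_eq0 mulf_eq0 (negbTE u1) /= => /eqP.
Qed.

Lemma ffe_neg (b : R) i : ffe i (- b) = (-1) ^+ i * pochhammer b i.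
Proof.
elim: i => [|i IH]; first by rewrite ffe0 poch0 expr0 mulr1.
by rewrite ffeS pochS IH exprS; ring.
Qed.

Lemma theta_neg d g (b : R) :
  theta d g (- b) = \sum_(i < d) g i * (pochhammer b i * u ^+ i).
Proof.
rewrite /theta; apply: eq_bigr => i _; rewrite exprNn ffe_neg.
transitivity (g i * ((-1) ^+ i * (-1) ^+ i) * u ^+ i * pochhammer b i); first by ring.
by rewrite -exprMn mulN1r opprK expr1n; ring.
Qed.

End Alg.
Arguments supp {R}. Arguments sh {R}. Arguments theta {R}. Arguments Eop {R}.
Section Poly.
Variable R : realType.

Definition ffp (i : nat) : {poly R} := \prod_(t < i) ('X - (t%:R)%:P).

Lemma ffp_eval i x : (ffp i).[x] = ffe i x.
Proof. by rewrite /ffp horner_prod; apply: eq_bigr => t _; rewrite hornerXsubC. Qed.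

Lemma ffp_monic i : ffp i \is monic.
Proof. by rewrite /ffp monic_prod_XsubC. Qed.

Lemma ffp_size i : size (ffp i) = i.+1.
Proof.
rewrite /ffp; elim: i => [|i IH]; first by rewrite big_ord0 size_poly1.
rewrite big_ord_recr /= size_Mmonic ?monicXsubC ?size_XsubC ?IH //; last by rewrite -size_poly_gt0 IH.
by rewrite addn2.
Qed.

Lemma size_le_coef (q : {poly R}) d : (size q <= d.+1)%N -> q`_d = 0 -> (size q <= d)%N.
Proof.
move=> hs hc; rewrite leqNgt; apply/negP => hlt.
have hsz : size q = d.+1 by apply/eqP; rewrite eqn_leq hs hlt.
have : lead_coef q = 0 by rewrite lead_coefE hsz.
move/eqP; rewrite lead_coef_eq0 => /eqP q0.
by move: hsz; rewrite q0 size_poly0.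
Qed.

Lemma ff_expand d (Q : {poly R}) : (size Q <= d)%N ->
  exists g : nat -> R, supp d g /\ (forall x, Q.[x] = \sum_(i < d) g i * ffe i x)
    /\ ((0 < d)%N -> g d.-1 = Q`_d.-1).
Proof.
elim: d Q => [|d IH] Q hs.
  exists (fun _ => 0); split; first by [].
  split; last by [].
  move=> x; rewrite big_ord0; move: hs; rewrite leqn0 size_poly_eq0 => /eqP ->.
  by rewrite horner0.
pose Q' := Q - Q`_d *: ffp d.
have hs' : (size Q' <= d)%N.
  apply: size_le_coef.
    rewrite /Q'; apply: (leq_trans (size_polyD _ _)); rewrite geq_max hs /= size_polyN.
    apply: (leq_trans (size_scale_leq _ _)); by rewrite ffp_size.
  rewrite /Q' coefB coefZ.
  have : (ffp d)`_d = 1.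
    have := ffp_monic d; rewrite monicE lead_coefE ffp_size /= => /eqP //.
  by move=> ->; rewrite mulr1 subrr.
have [g [hg [hQ _]]] := IH Q' hs'.
exists (fun i => g i + (if i == d then Q`_d else 0)); split.
  move=> i hi; rewrite hg ?add0r; last exact: ltnW.
  by rewrite ifF //; apply/negbTE; rewrite neq_ltn hi orbT.
split.
  move=> x; rewrite big_ord_recr /= hg // add0r eqxx.
  have -> : Q.[x] = (Q' + Q`_d *: ffp d).[x] by rewrite /Q' subrK.
  rewrite hornerD hornerZ ffp_eval hQ; congr (_ + _).
  apply: eq_bigr => i _; by rewrite ifF ?addr0 // (ltn_eqF (ltn_ord i)).
by move=> _ /=; rewrite hg // add0r eqxx.
Qed.


Definition fpoly (d : nat) (a : nat -> R) : {poly R} := \sum_(i < d) a i *: ffp i.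

Lemma fpoly_eval d a x : (fpoly d a).[x] = \sum_(i < d) a i * ffe i x.
Proof. by rewrite /fpoly horner_sum; apply: eq_bigr => i _; rewrite hornerZ ffp_eval. Qed.

Lemma fpoly_size d a : (size (fpoly d a) <= d)%N.
Proof.
rewrite /fpoly; elim: d => [|d IH]; first by rewrite big_ord0 size_poly0.
rewrite big_ord_recr /=; apply: (leq_trans (size_polyD _ _)); rewrite geq_max.
rewrite (leq_trans IH) //=; apply: (leq_trans (size_scale_leq _ _)); by rewrite ffp_size.
Qed.

Lemma fpoly_coef d a : (fpoly d.+1 a)`_d = a d.
Proof.
rewrite /fpoly coef_sum big_ord_recr /= big1 ?add0r.
  rewrite coefZ; have := ffp_monic d; rewrite monicE lead_coefE ffp_size /= => /eqP ->.
  by rewrite mulr1.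
move=> i _; rewrite coefZ nth_default ?mulr0 // ffp_size; exact: ltn_ord.
Qed.

Lemma fpoly_prod d a (rs : seq R) : size rs = d -> uniq rs ->
  (forall z, z \in rs -> (fpoly d.+1 a).[z] = 0) ->
  forall x, (fpoly d.+1 a).[x] = a d * \prod_(z <- rs) (x - z).
Proof.
move=> hsz hu hz x.
pose rho := \prod_(z <- rs) ('X - z%:P).
pose q := fpoly d.+1 a - a d *: rho.
have hq : q = 0.
  apply/eqP; apply: contraT => q0.
  have hr : all (root q) rs.
    apply/allP => z zr; rewrite /root /q hornerD hornerN hornerZ hz //.
    rewrite /rho horner_prod (bigD1_seq z) //= hornerXsubC subrr mul0r mulr0.
    by rewrite subr0.
  have := max_poly_roots q0 hr hu; rewrite hsz.
  have : (size q <= d)%N.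
    apply: size_le_coef.
      rewrite /q; apply: (leq_trans (size_polyD _ _)); rewrite geq_max fpoly_size size_polyN.
      apply: (leq_trans (size_scale_leq _ _)); by rewrite /rho size_prod_XsubC hsz.
    rewrite /q coefB coefZ fpoly_coef.
    have := monic_prod_XsubC rs predT id; rewrite monicE lead_coefE size_prod_XsubC hsz /=.
    by rewrite -/rho => /eqP ->; rewrite mulr1 subrr.
  by move=> h1 h2; have := leq_trans h2 h1; rewrite ltnn.
have : q.[x] = 0 by rewrite hq horner0.
rewrite /q hornerD hornerN hornerZ /rho horner_prod => /eqP; rewrite subr_eq0 => /eqP ->.
by congr (_ * _); apply: eq_bigr => z _; rewrite hornerXsubC.
Qed.

End Poly.
Arguments ffp {R}. Arguments fpoly {R}.
Lemma bin_ffact_mul x l m : (m <= l)%N -> (l <= x)%N ->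
  ('C(x, l) * l ^_ m = x ^_ m * 'C(x - m, l - m))%N.
Proof.
move=> ml lx; apply/eqP.
rewrite -(eqn_pmul2r (fact_gt0 (l - m))) -(eqn_pmul2r (fact_gt0 (x - l))).
have e1 : ('C(x, l) * l ^_ m * (l - m)`! * (x - l)`! = x`!)%N.
  by rewrite -(mulnA _ (l ^_ m)) ffact_fact // -mulnA bin_fact.
have e2 : (x ^_ m * 'C(x - m, l - m) * (l - m)`! * (x - l)`! = x`!)%N.
  have -> : (x - l = (x - m) - (l - m))%N by lia.
  rewrite -!mulnA bin_fact; last by lia.
  by rewrite ffact_fact //; lia.
by rewrite e1 e2.
Qed.

Lemma ffe_nat (R : realType) k m : ffe m (k%:R : R) = (k ^_ m)%:R.
Proof.
elim: m => [|m IH]; first by rewrite ffe0 ffactn0.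
rewrite ffeS IH ffactnSr natrM; case: (leqP m k) => mk; first by rewrite natrB.
by rewrite ffact_small // !mul0r.
Qed.

Lemma binsum_ffact (R : realType) (z : R) x m : (m <= x)%N ->
  \sum_(l < x.+1) 'C(x, l)%:R * z ^+ l * (l ^_ m)%:R =
  (x ^_ m)%:R * z ^+ m * (z + 1) ^+ (x - m).
Proof.
move=> mx; rewrite exprD1n big_distrr /=.
rewrite -(big_mkord xpredT (fun l => 'C(x, l)%:R * z ^+ l * (l ^_ m)%:R)).
rewrite (@big_cat_nat _ _ _ m) //=; last exact: leqW.
rewrite big_nat big1 ?add0r; last by move=> l /andP[_ lm]; rewrite ffact_small // mulr0.
rewrite -{1}(add0n m) big_addn.
have -> : (x.+1 - m = (x - m).+1)%N by lia.
rewrite big_mkord; apply: eq_bigr => l _.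
have h := @bin_ffact_mul x (l + m) m (leq_addl _ _).
rewrite addnK in h.
have lx : (l + m <= x)%N by have := ltn_ord l; lia.
rewrite -mulr_natr exprD.
transitivity ((('C(x, l + m) * (l + m) ^_ m)%N)%:R * z ^+ l * z ^+ m).
  by rewrite natrM; ring.
by rewrite h // natrM; ring.
Qed.

Lemma ffe_binom (R : realType) (c : R) x m : c - 1 != 0 ->
  c ^+ x * ffe m x%:R =
  (c / (c - 1)) ^+ m * \sum_(l < x.+1) 'C(x, l)%:R * (c - 1) ^+ l * ffe m l%:R.
Proof.
move=> c1.
under eq_bigr do rewrite ffe_nat.
rewrite ffe_nat; case: (leqP m x) => mx.
  rewrite binsum_ffact // subrK.
  rewrite -{1}(subnKC mx) exprD expr_div_n.
  by field; rewrite expf_neq0.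
rewrite (ffact_small mx) mulr0 big1 ?mulr0 // => l _.
by rewrite ffact_small ?mulr0 //; apply: (leq_trans (ltn_ord l)).
Qed.
Section Roots.
Variable R : realType.
Variables (p : nat) (beta : 'I_p -> R) (n : 'I_p -> nat).

Definition rts : seq R := [seq - beta i - s%:R | i <- enum 'I_p, s <- iota 0 (n i)].

Lemma rts_size : size rts = (\sum_(i < p) n i)%N.
Proof.
rewrite /rts size_allpairs_dep sumnE big_map big_enum /=.
by apply: eq_bigr => i _; rewrite size_iota.
Qed.

Lemma rts_mem z : z \in rts -> exists i : 'I_p, exists2 s, (s < n i)%N & z = - beta i - s%:R.
Proof.
move=> /allpairsPdep [i [s [_ hs ->]]]; exists i; exists s => //.
by move: hs; rewrite mem_iota add0n.
Qed.

Lemma rts_uniq :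
  (forall i j : 'I_p, i != j -> ~ (exists z : int, beta i - beta j = z%:~R)) ->
  uniq rts.
Proof.
move=> hd; apply: allpairs_uniq_dep.
- exact: enum_uniq.
- by move=> i _; exact: iota_uniq.
move=> [i s] [j t] _ _ /= h.
case: (eqVneq i j) => [eij | nij].
  subst j; have : (s%:R : R) = t%:R by lra.
  by move/eqP; rewrite eqr_nat => /eqP ->.
exfalso; apply: (hd i j nij); exists (t%:Z - s%:Z).
rewrite intrB -!pmulrn; lra.
Qed.

Lemma rts_prod l : \prod_(z <- rts) (l - z) = \prod_(i < p) pochhammer (beta i + l) (n i).
Proof.
rewrite /rts big_allpairs_dep big_enum /=; apply: eq_big => [i|i _] //.
rewrite /pochhammer -(big_mkord xpredT (fun k => beta i + l + k%:R)).
by rewrite /index_iota subn0; apply: eq_bigr => s _; ring.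
Qed.

End Roots.
Lemma poch_negnat (R : realType) x l : pochhammer (- (x%:R : R)) l = (-1) ^+ l * (x ^_ l)%:R.
Proof.
have := @ffe_neg R (- (x%:R : R)) l; rewrite opprK ffe_nat => ->.
by rewrite mulrA -exprMn mulN1r opprK expr1n mul1r.
Qed.

Lemma prod_enum (R : realType) p (F : 'I_p -> R) : \prod_(j <- enum 'I_p) F j = \prod_(j < p) F j.
Proof. by rewrite big_enum /=; apply: eq_big => [i|i _]. Qed.

Lemma hterm (R : realType) p (beta : 'I_p -> R) (n : 'I_p -> nat) (c : R) x l :
  (forall i, 0 < beta i) ->
  (\prod_(j < p) pochhammer (beta j) (n j)) *
  hypgeom_term ((- x%:R) :: [seq beta j + (n j)%:R | j <- enum 'I_p])
               [seq beta j | j <- enum 'I_p] (1 - c) l =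
  'C(x, l)%:R * (c - 1) ^+ l * \prod_(j < p) pochhammer (beta j + l%:R) (n j).
Proof.
move=> hb; rewrite /hypgeom_term big_cons !big_map -!enumT !prod_enum poch_negnat -bin_ffact natrM.
have key : \prod_(j < p) pochhammer (beta j) (n j) * \prod_(j < p) pochhammer (beta j + (n j)%:R) l
  = \prod_(j < p) pochhammer (beta j) l * \prod_(j < p) pochhammer (beta j + l%:R) (n j).
  rewrite -!big_split /=; apply: eq_bigr => j _.
  by rewrite -pochD addnC pochD.
have hP2 : \prod_(j < p) pochhammer (beta j) l != 0.
  by rewrite gt_eqF //; apply: prodr_gt0 => j _; exact: poch_gt0.
have lf : ((l`!)%:R : R) != 0 by rewrite pnatr_eq0 -lt0n fact_gt0.
move: key hP2 lf.
set A := \prod_(j < p) pochhammer (beta j) (n j).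
set P1 := \prod_(j < p) pochhammer (beta j + (n j)%:R) l.
set P2 := \prod_(j < p) pochhammer (beta j) l.
set Q := \prod_(j < p) pochhammer (beta j + l%:R) (n j).
move=> key hP2 lf.
have e : (c - 1) ^+ l = (-1) ^+ l * (1 - c) ^+ l by rewrite -exprMn mulN1r opprB.
rewrite e.
transitivity ((A * P1) * ((-1) ^+ l * 'C(x, l)%:R * (1 - c) ^+ l) / P2).
  by field; rewrite hP2 lf.
transitivity ((P2 * Q) * ((-1) ^+ l * 'C(x, l)%:R * (1 - c) ^+ l) / P2).
  by congr (_ * _ / _).
by field.
Qed.

Lemma hterm0 (R : realType) (as_ bs : seq R) x (z : R) l : (x < l)%N ->
  hypgeom_term ((- x%:R) :: as_) bs z l = 0.
Proof.
by move=> xl; rewrite /hypgeom_term big_cons poch_negnat ffact_small // mulr0 !mul0r.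
Qed.

Theorem mainTheorem4 (R : realType) (p : nat) (beta : 'I_p -> R) (c : R)
  (n : 'I_p -> nat) (B : {poly R}) :
  0 < c -> c < 1 ->
  (forall i, 0 < beta i) ->
  (forall i j : 'I_p, i != j -> ~ (exists z : int, beta i - beta j = z%:~R)) ->
  is_typeII_meixner2 beta c n B ->
  forall x : nat,
    B.[x%:R] =
      (c / (c - 1)) ^+ (\sum_(i < p) n i)
      * (\prod_(j < p) pochhammer (beta j) (n j))
      * (c ^+ x)^-1
      * hypgeom ((- x%:R) :: [seq beta j + (n j)%:R | j <- enum 'I_p])
                [seq beta j | j <- enum 'I_p] (1 - c).
Proof.
move=> c0 c1 hb hd [Bm Bs Bo] x.
set N := (\sum_(i < p) n i)%N.
set u := c / (1 - c).
have hc1 : 1 - c != 0 by rewrite subr_eq0 eq_sym lt_eqF.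
have hcm1 : c - 1 != 0 by rewrite subr_eq0 lt_eqF.
have u1 : 1 + u != 0.
  have -> : 1 + u = (1 - c)^-1 by rewrite /u; field.
  by rewrite invr_eq0.
have nu : - u = c / (c - 1).
  rewrite /u; field; by rewrite hc1 hcm1.
have [g [hg [hB hgN]]] := @ff_expand R N.+1 B (eq_leq Bs).
have g1 : g N = 1.
  have := hgN (ltn0Sn N); rewrite /= => ->.
  by have := Bm; rewrite monicE lead_coefE Bs => /eqP.
pose F := theta u N.+1 g.
have Fz : forall (i : 'I_p) (s : nat), (s < n i)%N -> F (- beta i - s%:R) = 0.
  move=> i; apply: (@vanish R u u1 (n i) F (beta i) (hb i)) => j jn.
  rewrite /F -(@iter_theta R u N.+1 g j _ hg) theta_neg.
  have h1 := @poly_cvg R c c0 c1 (beta i) (N.+1 + j) (iter j sh g) (hb i).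
  have h2 := Bo i j jn.
  have E : (fun k : nat => k%:R ^+ j * B.[k%:R] * meixner2_weight (beta i) c k) =
     (fun k : nat => (\sum_(m < N.+1 + j) iter j sh g m * ffe m k%:R) * meixner2_weight (beta i) c k).
    by apply: funext => k; rewrite hB (@iter_sh_eval R N.+1 g j _ hg).
  rewrite E in h2.
  have e1 := @cvg_lim _ (@norm_hausdorff _ R^o) _ _ _ _ _ h1.
  have e2 := @cvg_lim _ (@norm_hausdorff _ R^o) _ _ _ _ _ h2.
  have e3 := etrans (esym (e1 eventually_filter)) (e2 eventually_filter).
  have Sn : S c (beta i) != 0 by rewrite gt_eqF //; exact: (@S_gt0 R c c0 c1 (beta i) (hb i)).
  by apply: (mulfI Sn); rewrite mulr0; exact: e3.
pose a := fun m => g m * (- u) ^+ m.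
have Fe : forall y, F y = (fpoly N.+1 a).[y].
  move=> y; rewrite fpoly_eval /F /theta; apply: eq_bigr => m _; by rewrite /a.
have Fp : forall y, F y = (- u) ^+ N * \prod_(z <- rts R p beta n) (y - z).
  move=> y; rewrite Fe (@fpoly_prod R N a (rts R p beta n)).
  - by rewrite /a g1 mul1r.
  - exact: rts_size.
  - exact: rts_uniq.
  move=> z /rts_mem [i [s si ->]]; rewrite -Fe; exact: Fz.
have Hh : hypgeom ((- x%:R) :: [seq beta j + (n j)%:R | j <- enum 'I_p])
                [seq beta j | j <- enum 'I_p] (1 - c) =
    \sum_(l < x.+1) hypgeom_term ((- x%:R) :: [seq beta j + (n j)%:R | j <- enum 'I_p])
                [seq beta j | j <- enum 'I_p] (1 - c) l.
  rewrite /hypgeom; apply: (@lim_near_cst _ (@norm_hausdorff _ R^o) _ _ eventually_filter).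
  exists x.+1 => // k /= hk.
  rewrite /series /= -(big_mkord xpredT) (@big_cat_nat _ _ _ x.+1) //=.
  rewrite [X in _ + X = _]big_nat_cond [X in _ + X = _]big1 ?addr0 //.
  move=> l /andP[/andP[hl _] _]; exact: hterm0.
rewrite Hh hB -nu.
have cx : c ^+ x != 0 by rewrite expf_neq0 // gt_eqF.
transitivity ((c ^+ x)^-1 * \sum_(m < N.+1) g m * (c ^+ x * ffe m x%:R)).
  rewrite big_distrr /=; apply: eq_bigr => m _; by field.
under eq_bigr do rewrite ffe_binom // -nu big_distrr /=.
have L1 : \sum_(m < N.+1) g m * \sum_(l < x.+1) (- u) ^+ m * ('C(x, l)%:R * (c - 1) ^+ l * ffe m l%:R)
   = \sum_(l < x.+1) 'C(x, l)%:R * (c - 1) ^+ l * F l%:R.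
  rewrite /F /theta.
  under eq_bigr do rewrite big_distrr /=.
  rewrite exchange_big /=; apply: eq_bigr => l _; rewrite big_distrr /=.
  by apply: eq_bigr => m _; ring.
rewrite L1.
transitivity ((c ^+ x)^-1 * ((- u) ^+ N * \sum_(l < x.+1) (\prod_(j < p) pochhammer (beta j) (n j)) *
  hypgeom_term ((- x%:R) :: [seq beta j + (n j)%:R | j <- enum 'I_p])
                [seq beta j | j <- enum 'I_p] (1 - c) l)); last first.
  rewrite -big_distrr /=; ring.
congr (_ * _); rewrite big_distrr /=; apply: eq_bigr => l _.
rewrite Fp rts_prod hterm //; ring.
Qed.
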